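(* Let $g$ be a probability density on $\mathbb{R}$ which is unimodal, symmetric about $0$, and logconcave, with survivor function $\bar G = 1-G$. Then for all $z\ge 0$: (a) $\displaystyle \frac{g(z)}{g(2z)} \ge \frac{1}{2\bar G(z)}-1$; (b) $\displaystyle \frac{\bar G(z)}{\bar G(2z)} \ge \frac{1}{2\bar G(z)}-1$.
   Context: A density $g$ on $\mathbb{R}$ is logconcave if $\log g$ is concave on the support of $g$. Unimodal and symmetric about $0$ means $g(z)=g(-z)$ and $g$ is nonincreasing on $[0,\infty)$. $G$ is the cdf of $g$. Ratios are considered where denominators are positive. *)

(* Defs.v *)
From Stdlib Require Import Reals Lra.
Open Scope R_scope.

Definition is_density_with_cdf (g G : R -> R) : Prop :=
  (forall x, 0 <= g x) /\
  (forall a b, a <= b ->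
     exists pr : Riemann_integrable g a b, RiemannInt pr = G b - G a) /\
  (forall eps, 0 < eps -> exists M, forall x, x <= - M -> Rabs (G x) < eps) /\
  (forall eps, 0 < eps -> exists M, forall x, M <= x -> Rabs (G x - 1) < eps).

Definition symmetric_unimodal (g : R -> R) : Prop :=
  (forall z, g z = g (- z)) /\
  (forall x y, 0 <= x -> x <= y -> g y <= g x).

(* log g is concave on the support {g > 0} (which is thus an interval) *)
Definition logconcave (g : R -> R) : Prop :=
  (forall x y z, x <= y <= z -> 0 < g x -> 0 < g z -> 0 < g y) /\
  (forall x y l, 0 < g x -> 0 < g y -> 0 <= l <= 1 ->
     l * ln (g x) + (1 - l) * ln (g y) <= ln (g (l * x + (1 - l) * y))).

Definition survivor (G : R -> R) (z : R) : R := 1 - G z.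

(* Main.v *)
Require Import Defs.
From Stdlib Require Import Reals Lra Lia.
Open Scope R_scope.

Lemma int_lower (g G : R -> R) (Hint : forall a b, a <= b ->
     exists pr : Riemann_integrable g a b, RiemannInt pr = G b - G a)
  x y c : x <= y -> (forall t, x < t < y -> c <= g t) -> c * (y - x) <= G y - G x.
Proof.
  intros Hxy Hc. destruct (Hint x y Hxy) as [pr Hpr].
  rewrite <- Hpr, <- (RiemannInt_P15 (RiemannInt_P14 x y c)).
  apply RiemannInt_P19; auto.
Qed.

Lemma int_upper (g G : R -> R) (Hint : forall a b, a <= b ->
     exists pr : Riemann_integrable g a b, RiemannInt pr = G b - G a)
  x y c : x <= y -> (forall t, x < t < y -> g t <= c) -> G y - G x <= c * (y - x).
Proof.
  intros Hxy Hc. destruct (Hint x y Hxy) as [pr Hpr].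
  rewrite <- Hpr, <- (RiemannInt_P15 (RiemannInt_P14 x y c)).
  apply RiemannInt_P19; auto.
Qed.

Lemma lim_arg X Y L K : 0 <= L -> 0 <= K ->
  (forall n:nat, (0 < n)%nat -> X <= Y + L / INR n * K) -> X <= Y.
Proof.
  intros HL HK H. destruct (Rle_or_lt X Y) as [h|h]; auto.
  destruct (INR_archimed (X - Y) (L*K)) as [n Hn]; [lra|].
  specialize (H (S n) ltac:(lia)). rewrite S_INR in H.
  assert (0 <= INR n) by apply pos_INR.
  assert (L / (INR n + 1) * K <= L*K / (INR n + 1)) by (right; field; lra).
  assert (L*K / (INR n + 1) < X - Y).
  { apply Rmult_lt_reg_r with (INR n + 1); [lra|].
    unfold Rdiv; rewrite Rmult_assoc, Rinv_l; [|lra]. nra. }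
  lra.
Qed.

Section S.
Variables g G : R -> R.
Hypothesis Hint : forall a b, a <= b ->
     exists pr : Riemann_integrable g a b, RiemannInt pr = G b - G a.
Hypothesis Hpos : forall x, 0 <= g x.
Hypothesis Hmono : forall x y, 0 <= x -> x <= y -> g y <= g x.

Lemma step_cmp a b h c d (n:nat) : 0 <= a -> 0 <= b -> 0 <= h -> 0 <= c -> 0 <= d ->
  (forall i:nat, (i < n)%nat -> c * g (a + INR i * h) <= d * g (b + INR i * h)) ->
  c * (G (a + INR n * h) - G a) <= d * (G (b + INR n * h) - G b)
     + d * h * (g b - g (b + INR n * h)).
Proof.
  intros Ha Hb Hh Hc Hd. induction n as [|n IH]; intros Hi.
  - simpl. replace (a + 0 * h) with a by ring. replace (b + 0*h) with b by ring. lra.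
  - assert (IH' := IH (fun i Hi' => Hi i ltac:(lia))).
    assert (Hn := Hi n ltac:(lia)).
    rewrite S_INR.
    set (u := a + INR n * h) in *. set (v := b + INR n * h) in *.
    assert (0 <= INR n) by apply pos_INR.
    assert (0 <= u) by (unfold u; nra). assert (0 <= v) by (unfold v; nra).
    replace (a + (INR n + 1) * h) with (u + h) by (unfold u; ring).
    replace (b + (INR n + 1) * h) with (v + h) by (unfold v; ring).
    assert (K1 : G (u + h) - G u <= g u * (u + h - u)).
    { apply (int_upper g G Hint); [lra|]. intros t Ht. apply Hmono; lra. }
    assert (K2 : g (v + h) * (v + h - v) <= G (v + h) - G v).
    { apply (int_lower g G Hint); [lra|]. intros t Ht. apply Hmono; lra. }
    replace (u + h - u) with h in * by ring.
    replace (v + h - v) with h in * by ring.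
    assert (K3 : c * (G (u + h) - G u) <= c * (g u * h)) by (apply Rmult_le_compat_l; auto).
    assert (K4 : c * (g u * h) <= d * g v * h) by (rewrite <- Rmult_assoc; apply Rmult_le_compat_r; auto).
    assert (K5 : d * (g (v + h) * h) <= d * (G (v + h) - G v)) by (apply Rmult_le_compat_l; auto).
    nra.
Qed.

Lemma cmp a b L c d : 0 <= a -> 0 <= b -> 0 <= L -> 0 <= c -> 0 <= d ->
  (forall t, 0 <= t < L -> c * g (a + t) <= d * g (b + t)) ->
  c * (G (a + L) - G a) <= d * (G (b + L) - G b).
Proof.
  intros Ha Hb HL Hc Hd Ht.
  destruct HL as [HL|HL]; [|subst L; rewrite !Rplus_0_r; lra].
  apply (lim_arg _ _ L (d * g b)); [lra| |].
  { apply Rmult_le_pos; auto. }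
  intros n Hn. assert (Hn' : 0 < INR n) by (apply lt_0_INR; lia).
  set (h := L / INR n).
  assert (Hh : 0 <= h) by (unfold h; apply Rlt_le, Rdiv_lt_0_compat; lra).
  assert (HnL : INR n * h = L) by (unfold h; field; lra).
  assert (K := step_cmp a b h c d n Ha Hb Hh Hc Hd).
  rewrite HnL in K.
  assert (K' : c * (G (a + L) - G a) <= d * (G (b + L) - G b) + d * h * (g b - g (b + L))).
  { apply K. intros i Hi. apply Ht. split.
    - apply Rmult_le_pos; auto. apply pos_INR.
    - rewrite <- HnL. apply Rmult_lt_compat_r.
      + unfold h. apply Rdiv_lt_0_compat; lra.
      + apply lt_INR; lia. }
  assert (0 <= d * h * g (b + L)) by (apply Rmult_le_pos; [apply Rmult_le_pos|]; auto).
  replace (L / INR n * (d * g b)) with (d * h * g b) by (unfold h; ring).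
  nra.
Qed.
End S.

Section S.
Variables g G : R -> R.
Hypothesis Hint : forall a b, a <= b ->
     exists pr : Riemann_integrable g a b, RiemannInt pr = G b - G a.
Hypothesis Hpos : forall x, 0 <= g x.
Hypothesis Hmono : forall x y, 0 <= x -> x <= y -> g y <= g x.
Hypothesis Hsy : forall z, g z = g (- z).
Hypothesis Hlo : forall eps, 0 < eps -> exists M, forall x, x <= - M -> Rabs (G x) < eps.
Hypothesis Hhi : forall eps, 0 < eps -> exists M, forall x, M <= x -> Rabs (G x - 1) < eps.

Lemma G_mono x y : x <= y -> G x <= G y.
Proof.
  intros H. assert (K := int_lower g G Hint x y 0 H (fun t _ => Hpos t)). lra.
Qed.

Lemma G_le1 x : G x <= 1.
Proof.
  destruct (Rle_or_lt (G x) 1) as [h|h]; auto.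
  destruct (Hhi (G x - 1)) as [M HM]; [lra|].
  assert (K := HM (Rmax M x) (Rmax_l _ _)).
  assert (K2 := G_mono x (Rmax M x) (Rmax_r _ _)).
  apply Rabs_def2 in K. lra.
Qed.

Lemma refl_step h (n:nat) : 0 <= h ->
  G (INR n * h) - G 0 <= G 0 - G (- (INR n * h)) + h * (g 0 - g (INR n * h)).
Proof.
  intros Hh. induction n as [|n IH].
  - simpl. rewrite Rmult_0_l, Ropp_0. lra.
  - rewrite S_INR. set (u := INR n * h) in *.
    assert (0 <= INR n) by apply pos_INR.
    assert (0 <= u) by (unfold u; nra).
    replace ((INR n + 1) * h) with (u + h) by (unfold u; ring).
    assert (K1 : G (u + h) - G u <= g u * (u + h - u)).
    { apply (int_upper g G Hint); [lra|]. intros t Ht. apply Hmono; lra. }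
    assert (K2 : g (u + h) * (- u - - (u + h)) <= G (- u) - G (- (u + h))).
    { apply (int_lower g G Hint); [lra|]. intros t Ht. rewrite (Hsy t). apply Hmono; lra. }
    replace (u + h - u) with h in * by ring.
    replace (- u - - (u + h)) with h in * by ring.
    nra.
Qed.

Lemma G0_half : 1 / 2 <= G 0.
Proof.
  assert (HM : forall M, 0 < M -> G M - G 0 <= G 0 - G (- M)).
  { intros M HM. apply (lim_arg _ _ M (g 0)); [lra|auto|].
    intros n Hn. assert (0 < INR n) by (apply lt_0_INR; lia).
    assert (K := refl_step (M / INR n) n ltac:(apply Rlt_le, Rdiv_lt_0_compat; lra)).
    replace (INR n * (M / INR n)) with M in K by (field; lra).
    assert (0 <= M / INR n * g M) by (apply Rmult_le_pos; [apply Rlt_le, Rdiv_lt_0_compat; lra|auto]).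
    nra. }
  destruct (Rle_or_lt (1/2) (G 0)) as [h|h]; auto.
  set (eps := (1/2 - G 0) / 2).
  destruct (Hlo eps) as [M1 HM1]; [unfold eps; lra|].
  destruct (Hhi eps) as [M2 HM2]; [unfold eps; lra|].
  set (M := Rmax 1 (Rmax M1 M2)).
  assert (1 <= M) by apply Rmax_l.
  assert (M1 <= M) by (eapply Rle_trans; [apply Rmax_l|apply Rmax_r]).
  assert (M2 <= M) by (eapply Rle_trans; [apply Rmax_r|apply Rmax_r]).
  assert (K1 := HM1 (- M) ltac:(lra)). assert (K2 := HM2 M ltac:(lra)).
  apply Rabs_def2 in K1. apply Rabs_def2 in K2.
  assert (K := HM M ltac:(lra)). unfold eps in *. lra.
Qed.
Lemma refl_step' h (n:nat) : 0 <= h ->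
  G 0 - G (- (INR n * h)) <= G (INR n * h) - G 0 + h * (g 0 - g (INR n * h)).
Proof.
  intros Hh. induction n as [|n IH].
  - simpl. rewrite Rmult_0_l, Ropp_0. lra.
  - rewrite S_INR. set (u := INR n * h) in *.
    assert (0 <= INR n) by apply pos_INR.
    assert (0 <= u) by (unfold u; nra).
    replace ((INR n + 1) * h) with (u + h) by (unfold u; ring).
    assert (K1 : g (u + h) * (u + h - u) <= G (u + h) - G u).
    { apply (int_lower g G Hint); [lra|]. intros t Ht. apply Hmono; lra. }
    assert (K2 : G (- u) - G (- (u + h)) <= g u * (- u - - (u + h))).
    { apply (int_upper g G Hint); [lra|]. intros t Ht. rewrite (Hsy t). apply Hmono; lra. }
    replace (u + h - u) with h in * by ring.
    replace (- u - - (u + h)) with h in * by ring.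
    nra.
Qed.

Lemma G0_half' : G 0 <= 1 / 2.
Proof.
  assert (HM : forall M, 0 < M -> G 0 - G (- M) <= G M - G 0).
  { intros M HM. apply (lim_arg _ _ M (g 0)); [lra|auto|].
    intros n Hn. assert (0 < INR n) by (apply lt_0_INR; lia).
    assert (K := refl_step' (M / INR n) n ltac:(apply Rlt_le, Rdiv_lt_0_compat; lra)).
    replace (INR n * (M / INR n)) with M in K by (field; lra).
    assert (0 <= M / INR n * g M) by (apply Rmult_le_pos; [apply Rlt_le, Rdiv_lt_0_compat; lra|auto]).
    nra. }
  destruct (Rle_or_lt (G 0) (1/2)) as [h|h]; auto.
  set (eps := (G 0 - 1/2) / 2).
  destruct (Hlo eps) as [M1 HM1]; [unfold eps; lra|].
  destruct (Hhi eps) as [M2 HM2]; [unfold eps; lra|].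
  set (M := Rmax 1 (Rmax M1 M2)).
  assert (1 <= M) by apply Rmax_l.
  assert (M1 <= M) by (eapply Rle_trans; [apply Rmax_l|apply Rmax_r]).
  assert (M2 <= M) by (eapply Rle_trans; [apply Rmax_r|apply Rmax_r]).
  assert (K1 := HM1 (- M) ltac:(lra)). assert (K2 := HM2 M ltac:(lra)).
  apply Rabs_def2 in K1. apply Rabs_def2 in K2.
  assert (K := HM M ltac:(lra)). unfold eps in *. lra.
Qed.
End S.

Lemma pointwise (g : R -> R) (Hpos : forall x, 0 <= g x) (Hlc : logconcave g) t z s :
  0 <= t <= z -> 0 <= s -> g t * g (2 * z + s) <= g (z + t) * g (z + s).
Proof.
  intros Ht Hs. destruct Hlc as [Hsupp Hcc].
  destruct (Hpos t) as [gt|gt]; [|rewrite <- gt; rewrite Rmult_0_l; apply Rmult_le_pos; auto].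
  destruct (Hpos (2*z+s)) as [gw|gw]; [|rewrite <- gw; rewrite Rmult_0_r; apply Rmult_le_pos; auto].
  assert (g1 : 0 < g (z + t)) by (apply (Hsupp t _ (2*z+s)); auto; lra).
  assert (g2 : 0 < g (z + s)) by (apply (Hsupp t _ (2*z+s)); auto; lra).
  destruct (Req_dec (2*z+s-t) 0) as [D0|D0].
  { assert (z = 0) by lra. assert (s = 0) by lra. assert (t = 0) by lra. subst.
    replace (2*0+0) with 0 by ring. replace (0+0) with 0 by ring. lra. }
  set (D := 2*z+s-t) in *.
  assert (HD : 0 < D) by (unfold D in *; destruct (Rle_lt_or_eq_dec 0 (2*z+s-t)) as [q|q]; [lra|lra|exfalso; auto]).

  set (l := (z + s - t) / D). set (l' := z / D).
  assert (E1 : l * t + (1 - l) * (2*z+s) = z + t) by (unfold l, D in *; field; auto).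
  assert (E2 : l' * t + (1 - l') * (2*z+s) = z + s) by (unfold l', D in *; field; auto).
  assert (Hl : 0 <= l <= 1).
  { unfold l; split; [apply Rmult_le_pos; [lra|apply Rlt_le, Rinv_0_lt_compat; lra]|].
    apply Rmult_le_reg_r with D; auto. unfold Rdiv. rewrite Rmult_assoc, Rinv_l; [unfold D; lra|lra]. }
  assert (Hl' : 0 <= l' <= 1).
  { unfold l'; split; [apply Rmult_le_pos; [lra|apply Rlt_le, Rinv_0_lt_compat; lra]|].
    apply Rmult_le_reg_r with D; auto. unfold Rdiv. rewrite Rmult_assoc, Rinv_l; [unfold D; lra|lra]. }
  assert (Hsum : l + l' = 1) by (unfold l, l', D in *; field; auto).
  assert (C1 := Hcc t (2*z+s) l gt gw Hl). rewrite E1 in C1.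
  assert (C2 := Hcc t (2*z+s) l' gt gw Hl'). rewrite E2 in C2.
  destruct (Rle_or_lt (g t * g (2*z+s)) (g (z+t) * g (z+s))) as [h|h]; auto.
  exfalso. apply ln_increasing in h; [|apply Rmult_lt_0_compat; auto].
  rewrite !ln_mult in h by auto.
  replace l' with (1 - l) in C2 by lra. nra.
Qed.

Lemma div_cmp p q r u : 0 < q -> 0 < u -> p * u <= r * q -> p / q <= r / u.
Proof.
  intros Hq Hu H.
  replace (p / q) with (p * u * / (q * u)) by (field; lra).
  replace (r / u) with (r * q * / (q * u)) by (field; lra).
  apply Rmult_le_compat_r; auto. apply Rlt_le, Rinv_0_lt_compat, Rmult_lt_0_compat; auto.
Qed.

Theorem lemma2 (g G : R -> R)
  (Hdens : is_density_with_cdf g G)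
  (Hsym : symmetric_unimodal g)
  (Hlc : logconcave g) :
  forall z, 0 <= z ->
    (0 < g (2 * z) -> 0 < survivor G z ->
       / (2 * survivor G z) - 1 <= g z / g (2 * z)) /\
    (0 < survivor G (2 * z) -> 0 < survivor G z ->
       / (2 * survivor G z) - 1 <= survivor G z / survivor G (2 * z)).
Proof.
  destruct Hdens as [Hpos [Hint [Hlo Hhi]]]. destruct Hsym as [Hsy Hmono].
  intros z Hz. unfold survivor.
  assert (G0 := G0_half' g G Hint Hpos Hmono Hsy Hlo Hhi).
  assert (Gm := G_mono g G Hint Hpos).
  assert (G1 := G_le1 g G Hint Hpos Hhi).
  set (A := G z - G 0).
  set (B := G (2*z) - G z).
  assert (HA : 0 <= A) by (unfold A; assert (K := Gm 0 z Hz); lra).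
  assert (HB : 0 <= B) by (unfold B; assert (K := Gm z (2*z) ltac:(lra)); lra).
  assert (HB1 : B <= 1 - G z) by (unfold B; assert (K := G1 (2*z)); lra).
  assert (Key : forall s, 0 <= s -> g (2*z+s) * A <= g (z+s) * B).
  { intros s Hs. unfold A, B.
    replace (G z) with (G (0 + z)) at 1 by (f_equal; ring).
    replace (G (2*z)) with (G (z + z)) by (f_equal; ring).
    apply (cmp g G Hint Hpos Hmono); auto; try lra.
    intros t Ht. rewrite Rplus_0_l, (Rmult_comm (g (2*z+s))), (Rmult_comm (g (z+s))).
    apply pointwise; auto; lra. }
  split.
  - intros Hg2 HS.
    replace (/ (2 * (1 - G z)) - 1) with ((G z - 1/2) / (1 - G z)) by (field; lra).
    apply div_cmp; auto.
    assert (K := Key 0 ltac:(lra)). rewrite !Rplus_0_r in K.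
    assert (0 <= g z) by auto.
    assert (g z * B <= g z * (1 - G z)) by (apply Rmult_le_compat_l; auto).
    assert ((G z - 1/2) * g (2*z) <= A * g (2*z)). { apply Rmult_le_compat_r; [lra|unfold A]. lra. }
    lra.
  - intros HS2 HS.
    replace (/ (2 * (1 - G z)) - 1) with ((G z - 1/2) / (1 - G z)) by (field; lra).
    apply div_cmp; auto.
    assert (HM : forall M, 0 <= M -> A * (G (2*z+M) - G (2*z)) <= (1 - G z) * (1 - G z)).
    { intros M HM.
      assert (K : A * (G (2*z+M) - G (2*z)) <= B * (G (z+M) - G z)).
      { apply (cmp g G Hint Hpos Hmono); auto; try lra.
        intros t Ht. rewrite (Rmult_comm A), (Rmult_comm B). apply Key; lra. }
      assert (K1 := Gm z (z+M) ltac:(lra)). assert (K2 := G1 (z+M)).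
      assert (B * (G (z+M) - G z) <= (1 - G z) * (G (z + M) - G z)) by (apply Rmult_le_compat_r; lra).
      assert ((1 - G z) * (G (z + M) - G z) <= (1 - G z) * (1 - G z)) by (apply Rmult_le_compat_l; lra).
      lra. }
    assert (HAS : A * (1 - G (2*z)) <= (1 - G z) * (1 - G z)).
    { destruct (Rle_or_lt (A * (1 - G (2*z))) ((1 - G z) * (1 - G z))) as [h|h]; auto.
      exfalso.
      assert (HA' : 0 < A).
      { destruct HA as [q|q]; auto. rewrite <- q in h. nra. }
      set (X := A * (1 - G (2*z)) - (1 - G z) * (1 - G z)).
      destruct (Hhi (X / (2 * A))) as [M0 HM0].
      { apply Rdiv_lt_0_compat; unfold X; lra. }
      set (M := Rmax 0 (M0 - 2*z)).
      assert (0 <= M) by apply Rmax_l.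
      assert (M0 - 2*z <= M) by apply Rmax_r.
      assert (K := HM0 (2*z+M) ltac:(lra)). apply Rabs_def2 in K.
      assert (K2 := HM M ltac:(lra)).
      assert (E : A * (X / (2 * A)) = X / 2) by (field; lra).
      assert (A * (1 - X / (2*A) - G (2*z)) <= A * (G (2*z+M) - G (2*z))) by (apply Rmult_le_compat_l; lra).
      unfold X in *. nra. }
    assert ((G z - 1/2) * (1 - G (2*z)) <= A * (1 - G (2*z))). { apply Rmult_le_compat_r; [lra|unfold A; lra]. }
    lra.
Qed.
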